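(* Let $G$ be the cube graph $Q_3$, let $P$ be a pot realizing $G$ according to Scenario 3, and let $\lambda$ be an assembly design of $G$ with $P_\lambda(G)\subseteq P$. Then there are at most two pairwise disjoint pairs $\{v_i,v_j\}$ of distinct vertices of $G$ with $\lambda(v_i)=\lambda(v_j)$; that is, there do not exist three pairwise disjoint such pairs.
   Context: Fix a set $\Sigma$ of symbols (bond-edge types) and a disjoint copy $\hat\Sigma=\{\hat a:a\in\Sigma\}$ with $\hat{\hat a}=a$; elements of $\Sigma\cup\hat\Sigma$ are cohesive-end types. A tile is a finite multiset of cohesive-end types. A pot is a finite set $P$ of tiles such that whenever $x$ occurs in a tile of $P$, $\hat x$ occurs in some tile of $P$. Graphs are finite, loops and multiple edges allowed. An assembly design of a graph $H$ is a labeling $\lambda$ of the half-edges of $H$ by cohesive-end types such that the two half-edges of each edge receive complementary labels $x,\hat x$; $\lambda(v)=t_v$ is the multiset of labels of half-edges at $v$, and $P_\lambda(H)=\{t_v\}$. $P$ realizes $H$ ($H\in\mathcal{O}(P)$) if some assembly design $\lambda$ has $P_\lambda(H)\subseteq P$. $P$ realizes $G$ according to Scenario 3 if $G\in\mathcal{O}(P)$, every $H\in\mathcal{O}(P)$ has $\#V(H)\ge\#V(G)$, and every $H\in\mathcal{O}(P)$ with $\#V(H)=\#V(G)$ is isomorphic to $G$. *)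

(* Defs.v *)
From mathcomp Require Import all_boot.
Set Implicit Arguments. Unset Strict Implicit. Unset Printing Implicit Defensive.

(* Cohesive-end types over a symbol type S: (a, false) = a, (a, true) = hat a. *)
Definition cend (S : eqType) := (S * bool)%type.
Definition hat (S : eqType) (x : cend S) : cend S := (x.1, ~~ x.2).

(* A tile is a finite multiset of cohesive-end types, represented by a sequence;
   two sequences denote the same tile iff they are permutations of each other
   (perm_eq).  A pot is a finite set of tiles, represented by a sequence. *)
Definition tile (S : eqType) := seq (cend S).

Definition tile_in (S : eqType) (t : tile S) (P : seq (tile S)) : bool :=
  has (perm_eq t) P.

Definition is_pot (S : eqType) (P : seq (tile S)) : Prop :=
  forall t x, t \in P -> x \in t -> exists2 t', t' \in P & hat x \in t'.

(* A finite multigraph (loops and multiple edges allowed) on vertex set 'I_n is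
   given by a list of edges E; edge number i is nth _ E i, its first half-edge
   is at (nth _ E i).1 and its second at (nth _ E i).2.
   An assembly design assigns to edge i the label lab i on its first half-edge,
   and hat (lab i) on its second half-edge (complementary labels). *)
Definition tile_at (S : eqType) (n : nat) (E : seq ('I_n * 'I_n))
    (lab : nat -> cend S) (v : 'I_n) : tile S :=
  flatten [seq let e := nth (v, v) E i in
               (if e.1 == v then [:: lab i] else [::]) ++
               (if e.2 == v then [:: hat (lab i)] else [::])
          | i <- iota 0 (size E)].

Definition design_in (S : eqType) (n : nat) (E : seq ('I_n * 'I_n))
    (lab : nat -> cend S) (P : seq (tile S)) : Prop :=
  forall v : 'I_n, tile_in (tile_at E lab v) P.

Definition realizes (S : eqType) (P : seq (tile S)) (n : nat)
    (E : seq ('I_n * 'I_n)) : Prop :=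
  exists lab : nat -> cend S, design_in E lab P.

(* number of (undirected) edges joining u and v (loops counted once each) *)
Definition mult (n : nat) (E : seq ('I_n * 'I_n)) (u v : 'I_n) : nat :=
  count (fun e => (e == (u, v)) || (e == (v, u))) E.

Definition mg_iso (n m : nat) (E : seq ('I_n * 'I_n)) (F : seq ('I_m * 'I_m))
    : Prop :=
  exists f : 'I_n -> 'I_m, bijective f /\
    forall u v : 'I_n, mult E u v = mult F (f u) (f v).

(* Scenario 3 (graphs are taken to have at least one vertex). *)
Definition scenario3 (S : eqType) (P : seq (tile S)) (n : nat)
    (G : seq ('I_n * 'I_n)) : Prop :=
  realizes P G /\
  (forall (m : nat) (H : seq ('I_m * 'I_m)), 0 < m -> realizes P H -> n <= m) /\
  (forall H : seq ('I_n * 'I_n), realizes P H -> mg_iso H G).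

(* The cube graph Q_3 on vertices 0..7 (binary strings), edges between
   vertices differing in exactly one bit. *)
Definition Q3 : seq ('I_8 * 'I_8) :=
  [seq (inord p.1, inord p.2) | p <- [:: (0,1); (0,2); (0,4); (1,3); (1,5);
     (2,3); (2,6); (3,7); (4,5); (4,6); (5,7); (6,7)]].

(* Main.v *)
Require Import Defs.
From mathcomp Require Import all_boot.
From mathcomp Require Import zify.
Set Implicit Arguments. Unset Strict Implicit. Unset Printing Implicit Defensive.

Definition o8 (n : nat) : 'I_8 := Ordinal (ltn_pmod n (isT : 0 < 8)).
Definition Q3l : seq (nat * nat) := [:: (0,1); (0,2); (0,4); (1,3); (1,5);
     (2,3); (2,6); (3,7); (4,5); (4,6); (5,7); (6,7)].
Definition Q3' : seq ('I_8 * 'I_8) := [seq (o8 p.1, o8 p.2) | p <- Q3l].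
Definition he := (nat * bool)%type.
Definition oppe (h : he) : he := (h.1, ~~ h.2).
Definition d8 : 'I_8 * 'I_8 := (ord0, ord0).

Definition hvE (E : seq ('I_8 * 'I_8)) (v : 'I_8) : seq he :=
  flatten [seq let e := nth (v, v) E i in
               (if e.1 == v then [:: (i, false)] else [::]) ++
               (if e.2 == v then [:: (i, true)] else [::])
          | i <- iota 0 (size E)].

Definition ep (E : seq ('I_8 * 'I_8)) (h : he) : 'I_8 :=
  let e := nth d8 E h.1 in if h.2 then e.2 else e.1.
Definition mk (s : bool) (x y : 'I_8) := if s then (y, x) else (x, y).
Definition swapE (E : seq ('I_8 * 'I_8)) (h1 h2 : he) : seq ('I_8 * 'I_8) :=
  [seq (if k == h1.1 then mk h1.2 (ep E h1) (ep E (oppe h2))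
        else if k == h2.1 then mk h2.2 (ep E h2) (ep E (oppe h1))
        else nth d8 E k) | k <- iota 0 (size E)].

Definition V8 : seq (ordinal 8) := [seq o8 i | i <- iota 0 8].
Definition multn (H : seq (nat*nat)) a b := count (fun e => (e == (a, b)) || (e == (b, a))) H.
Definition badn' (H : seq (nat * nat)) : bool :=
  has (fun a => 0 < multn H a a) (iota 0 8) ||
  has (fun a => has (fun b => (a != b) && (1 < multn H a b)) (iota 0 8)) (iota 0 8) ||
  has (fun a => has (fun b => (a != b) && (0 < multn H a b) && has (fun c =>
     [&& b != c, a != c, 0 < multn H b c & 0 < multn H a c]) (iota 0 8)) (iota 0 8)) (iota 0 8).
Definition badn (H0 : seq ('I_8 * 'I_8)) : bool := badn' [seq (val e.1, val e.2) | e <- H0].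

Definition HE : seq he := [seq (k, b) | k <- iota 0 12, b <- [:: false; true]].
Definition valid (h : he) := h.1 < 12.
Definition code (h : he) := h.1.*2 + h.2.
Definition lookup (cls : seq nat) (h : he) := nth 0 cls (code h).
Definition mergec (cls : seq nat) (a b : he) :=
  let ca := lookup cls a in let cb := lookup cls b in
  [seq (if c == ca then cb else c) | c <- cls].
Definition merge2 (cls : seq nat) (p : he * he) :=
  if valid p.1 && valid p.2 then mergec (mergec cls p.1 p.2) (oppe p.1) (oppe p.2)
  else cls.
Definition initc : seq nat := iota 0 24.
Definition closurec (C : seq (he * he)) := foldl merge2 initc C.

Definition badlist : seq (he * he) :=
  [seq p <- [seq (x, y) | x <- HE, y <- HE] | (p.1.1 != p.2.1) && badn (swapE Q3' p.1 p.2)].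

Definition refute' (B : seq (he * he)) (cls : seq nat) : bool :=
  has (fun x => lookup cls x == lookup cls (oppe x)) HE ||
  has (fun p => lookup cls p.1 == lookup cls p.2) B.
Definition refute (B : seq (he * he)) (C : seq (he * he)) : bool := refute' B (closurec C).

Definition cases3 (s t : seq he) : seq (seq (he * he)) :=
  match s, t with
  | [:: a; b; c], [:: d; e; f] =>
    [:: [:: (a,d); (b,e); (c,f)]; [:: (a,d); (b,f); (c,e)];
        [:: (a,e); (b,d); (c,f)]; [:: (a,e); (b,f); (c,d)];
        [:: (a,f); (b,d); (c,e)]; [:: (a,f); (b,e); (c,d)]]
  | _, _ => [::]
  end.

Definition hvQ v := hvE Q3' v.

Definition pairsL : seq ('I_8 * 'I_8) := [seq (a, b) | a <- V8, b <- V8].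
Definition L3 := [seq (ab, c) | ab <- pairsL, c <- cases3 (hvQ ab.1) (hvQ ab.2)].

Definition surv B := [seq x <- L3 | (x.1.1 != x.1.2) && ~~ refute B x.2].

Definition checkB (B : seq (he * he)) (Sv : seq ('I_8 * 'I_8 * seq (he * he))) : bool :=
  all (fun s1 => all (fun s2 => all (fun s3 =>
     ~~ uniq [:: s1.1.1; s1.1.2; s2.1.1; s2.1.2; s3.1.1; s3.1.2] ||
     refute B (s1.2 ++ s2.2 ++ s3.2)) Sv) Sv) Sv.

Definition check := checkB badlist (surv badlist).


Section L.
Variable S : eqType.
Implicit Types (lab : nat -> cend S).

Definition Lbl lab (h : he) : cend S := if h.2 then hat (lab h.1) else lab h.1.

Lemma hatK (x : cend S) : hat (hat x) = x.
Proof. by case: x => a b; rewrite /hat /= negbK. Qed.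

Lemma hat_neq (x : cend S) : hat x != x.
Proof. by case: x => a b; rewrite /hat /= xpair_eqE eqxx /=; case: b. Qed.

Lemma Lbl_opp lab h : Lbl lab (oppe h) = hat (Lbl lab h).
Proof. by case: h => k [] //=; rewrite /Lbl /= hatK. Qed.

Lemma tile_hv (E : seq ('I_8 * 'I_8)) lab v :
  tile_at E lab v = map (Lbl lab) (hvE E v).
Proof.
rewrite /tile_at /hvE map_flatten -map_comp; congr flatten; apply: eq_map => i /=.
by rewrite map_cat; case: ifP; case: ifP.
Qed.

Lemma perm2 (T : eqType) (x y u v : T) :
  perm_eq [:: x; y] [:: u; v] -> (x = u /\ y = v) \/ (x = v /\ y = u).
Proof.
move=> H; have := perm_mem H x; rewrite !inE eqxx /= => /esym /orP [] /eqP Ex.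
- subst x; move: H; rewrite perm_cons => /perm_mem/(_ y); rewrite !inE eqxx => /esym/eqP ->.
  by left.
- subst x; have H2 : perm_eq [:: v; y] [:: v; u].
    by apply: perm_trans H _; rewrite (perm_catC [:: u] [:: v]).
  move: H2; rewrite perm_cons => /perm_mem/(_ y); rewrite !inE eqxx => /esym/eqP ->.
  by right.
Qed.

Lemma perm3 (T : eqType) (x y z u v w : T) :
  perm_eq [:: x; y; z] [:: u; v; w] ->
  [/\ x = u, y = v & z = w] \/ [/\ x = u, y = w & z = v] \/
      [/\ x = v, y = u & z = w] \/ [/\ x = v, y = w & z = u] \/
   [/\ x = w, y = u & z = v] \/ [/\ x = w, y = v & z = u].
Proof.
move=> H; have := perm_mem H x; rewrite !inE eqxx /= => /esym /or3P [] /eqP Ex; subst x.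
- move: H; rewrite perm_cons => /perm2 [[-> ->]|[-> ->]].
  + by do 0 right; left.
  + by do 1 right; left.
- have H2 : perm_eq [:: v; y; z] [:: v; u; w].
    by apply: perm_trans H _; rewrite (perm_catCA [:: u] [:: v] [:: w]).
  move: H2; rewrite perm_cons => /perm2 [[-> ->]|[-> ->]].
  + by do 2 right; left.
  + by do 3 right; left.
- have H2 : perm_eq [:: w; y; z] [:: w; u; v].
    apply: perm_trans H _.
    by rewrite (perm_catCA [:: u; v] [:: w] [::]) cats0.
  move: H2; rewrite perm_cons => /perm2 [[-> ->]|[-> ->]].
  + by do 4 right; left.
  + by do 5 right.
Qed.

Definition holds lab (C : seq (he * he)) := forall p, p \in C -> Lbl lab p.1 = Lbl lab p.2.

Lemma cases3_sound lab s t :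
  size s = 3 -> size t = 3 -> perm_eq (map (Lbl lab) s) (map (Lbl lab) t) ->
  exists2 c, c \in cases3 s t & holds lab c.
Proof.
case: s => [|a [|b [|c [|? ?]]]] //; case: t => [|d [|e [|f [|? ?]]]] // _ _ /=.
move=> /perm3 H.
have HH : forall cc, cc \in cases3 [:: a; b; c] [:: d; e; f] ->
   (forall p, p \in cc -> Lbl lab p.1 == Lbl lab p.2) -> exists2 cc, cc \in cases3 [:: a; b; c] [:: d; e; f] & holds lab cc.
  by move=> c0 Hc Hp; exists c0 => // p /Hp /eqP.
case: H => [[E1 E2 E3]|[[E1 E2 E3]|[[E1 E2 E3]|[[E1 E2 E3]|[[E1 E2 E3]|[E1 E2 E3]]]]]].
- apply: (HH [:: (a,d); (b,e); (c,f)]); first by rewrite /cases3 !inE eqxx ?orbT.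
  by move=> p; rewrite !inE => /or3P [] /eqP -> /=; apply/eqP.
- apply: (HH [:: (a,d); (b,f); (c,e)]); first by rewrite /cases3 !inE eqxx ?orbT.
  by move=> p; rewrite !inE => /or3P [] /eqP -> /=; apply/eqP.
- apply: (HH [:: (a,e); (b,d); (c,f)]); first by rewrite /cases3 !inE eqxx ?orbT.
  by move=> p; rewrite !inE => /or3P [] /eqP -> /=; apply/eqP.
- apply: (HH [:: (a,e); (b,f); (c,d)]); first by rewrite /cases3 !inE eqxx ?orbT.
  by move=> p; rewrite !inE => /or3P [] /eqP -> /=; apply/eqP.
- apply: (HH [:: (a,f); (b,d); (c,e)]); first by rewrite /cases3 !inE eqxx ?orbT.
  by move=> p; rewrite !inE => /or3P [] /eqP -> /=; apply/eqP.
- apply: (HH [:: (a,f); (b,e); (c,d)]); first by rewrite /cases3 !inE eqxx ?orbT.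
  by move=> p; rewrite !inE => /or3P [] /eqP -> /=; apply/eqP.
Qed.

Definition Inv lab (cls : seq nat) := size cls = 24 /\
  forall x y, valid x -> valid y -> lookup cls x = lookup cls y -> Lbl lab x = Lbl lab y.

Lemma code_lt x : valid x -> code x < 24.
Proof. by case: x => k [] /=; rewrite /valid /code /= -muln2 => H; lia. Qed.

Lemma lookup_map (f : nat -> nat) cls x : valid x -> size cls = 24 ->
  lookup (map f cls) x = f (lookup cls x).
Proof. by move=> vx sz; rewrite /lookup (nth_map 0) // sz code_lt. Qed.

Lemma merge_inv lab cls a b : Inv lab cls -> valid a -> valid b ->
  Lbl lab a = Lbl lab b -> Inv lab (mergec cls a b).
Proof.
move=> [sz I] va vb Eab; split; first by rewrite size_map.
move=> x y vx vy; rewrite !lookup_map //.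
case: (eqVneq (lookup cls x) (lookup cls a)) => Hx;
case: (eqVneq (lookup cls y) (lookup cls a)) => Hy.
- by move=> _; rewrite (I _ _ vx va Hx) (I _ _ vy va Hy).
- by move=> /(I _ _ vb vy) <-; rewrite (I _ _ vx va Hx).
- by move=> /(I _ _ vx vb) ->; rewrite (I _ _ vy va Hy).
- exact: I.
Qed.

Lemma merge2_inv lab cls p : Inv lab cls -> Lbl lab p.1 = Lbl lab p.2 ->
  Inv lab (merge2 cls p).
Proof.
move=> Ic E; rewrite /merge2; case: ifP => // /andP [v1 v2].
apply: merge_inv => //; first exact: merge_inv.
by rewrite !Lbl_opp E.
Qed.

Lemma initc_inv lab : Inv lab initc.
Proof.
split; first by rewrite size_iota.
move=> x y vx vy; rewrite /lookup /initc !nth_iota ?code_lt // !add0n.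
case: x y vx vy => k b [k' b'] _ _; rewrite /code /= -!muln2.
by case: b; case: b' => /= H; [ have -> : k = k' by lia | exfalso; lia | exfalso; lia | have -> : k = k' by lia ].
Qed.

Lemma closure_inv lab C : holds lab C -> Inv lab (closurec C).
Proof.
rewrite /closurec; move: initc (initc_inv lab); elim: C => [|p C IH] cls Ic HC //=.
apply: IH; first by apply: merge2_inv => //; apply: HC; rewrite mem_head.
by move=> q Hq; apply: HC; rewrite in_cons Hq orbT.
Qed.

Definition cnt lab (e : 'I_8 * 'I_8) k v (a : pred (cend S)) : nat :=
  ((e.1 == v) && a (lab k)) + ((e.2 == v) && a (hat (lab k))).

Lemma tile_count (E : seq ('I_8 * 'I_8)) lab v a :
  count a (tile_at E lab v) = \sum_(k < size E) cnt lab (nth d8 E k) k v a.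
Proof.
rewrite /tile_at count_flatten -map_comp sumnE big_map.
have -> : iota 0 (size E) = index_iota 0 (size E) by rewrite /index_iota subn0.
rewrite big_mkord; apply: eq_bigr => i _ /=.
rewrite (set_nth_default d8) // count_cat /cnt.
by case: ifP => H1; case: ifP => H2 /=; rewrite ?H1 ?H2 /= ?addn0.
Qed.

Lemma sum_swap n (F G : nat -> nat) i j : i < n -> j < n -> i != j ->
  (forall k, k < n -> k != i -> k != j -> F k = G k) -> F i + F j = G i + G j ->
  \sum_(k < n) F k = \sum_(k < n) G k.
Proof.
move=> ltin ltjn nij HFG Hij.
rewrite (bigD1 (Ordinal ltin)) //= [RHS](bigD1 (Ordinal ltin)) //=.
have Hj : (Ordinal ltjn != Ordinal ltin) by rewrite -val_eqE /= eq_sym.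
rewrite (bigD1 (Ordinal ltjn)) ?Hj //= [in RHS](bigD1 (Ordinal ltjn)) ?Hj //=.
rewrite !addnA Hij; congr (_ + _); apply: eq_bigr => k /andP [Hk1 Hk2].
by apply: HFG; rewrite ?ltn_ord // -val_eqE in Hk1 Hk2 *.
Qed.

Lemma size_swapE E h1 h2 : size (swapE E h1 h2) = size E.
Proof. by rewrite size_map size_iota. Qed.

Lemma nth_swapE E h1 h2 k : k < size E ->
  nth d8 (swapE E h1 h2) k =
  (if k == h1.1 then mk h1.2 (ep E h1) (ep E (oppe h2))
   else if k == h2.1 then mk h2.2 (ep E h2) (ep E (oppe h1))
   else nth d8 E k).
Proof. by move=> Hk; rewrite (nth_map 0) ?size_iota // nth_iota. Qed.

Lemma cnt_mk lab s x y k v a :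
  cnt lab (mk s x y) k v a = ((x == v) && a (Lbl lab (k, s))) + ((y == v) && a (Lbl lab (k, ~~ s))).
Proof. by case: s; rewrite /cnt /mk /Lbl //= addnC. Qed.

Lemma nth_mk E i s : nth d8 E i = mk s (ep E (i, s)) (ep E (i, ~~ s)).
Proof. by rewrite /ep /mk /=; case: s; case: (nth d8 E i). Qed.

Lemma swap_perm (E : seq ('I_8 * 'I_8)) lab (h1 h2 : he) v :
  h1.1 < size E -> h2.1 < size E -> h1.1 != h2.1 -> Lbl lab h1 = Lbl lab h2 ->
  perm_eq (tile_at (swapE E h1 h2) lab v) (tile_at E lab v).
Proof.
case: h1 h2 => i s1 [j s2] /= Hi Hj Hij HL.
apply/permP => a; rewrite !tile_count size_swapE.
apply: (@sum_swap _ (fun k => cnt lab (nth d8 (swapE E (i, s1) (j, s2)) k) k v a) (fun k => cnt lab (nth d8 E k) k v a) _ _ Hi Hj Hij).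
- by move=> k Hk Hki Hkj; rewrite nth_swapE // (negbTE Hki) (negbTE Hkj).
rewrite !nth_swapE // eqxx eq_sym (negbTE Hij) eqxx /=.
rewrite !cnt_mk (nth_mk E i s1) (nth_mk E j s2) !cnt_mk.
have E1 := Lbl_opp lab (i, s1); have E2 := Lbl_opp lab (j, s2); rewrite /= in E1 E2.
rewrite E1 E2 HL.
rewrite /oppe /=; lia.
Qed.

Lemma hasI8 (p : nat -> bool) : has p (iota 0 8) -> exists a : 'I_8, p a.
Proof.
move/hasP => [a Ha Pa]; have a8 : a < 8 by rewrite mem_iota in Ha.
by exists (Ordinal a8).
Qed.

Lemma memI8 (a : 'I_8) : (val a \in iota 0 8).
Proof. by rewrite mem_iota ltn_ord. Qed.

Lemma multnE (H : seq ('I_8 * 'I_8)) (a b : 'I_8) :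
  multn [seq (val e.1, val e.2) | e <- H] a b = mult H a b.
Proof.
rewrite /multn /mult count_map; apply: eq_count => -[x y] /=.
by rewrite !xpair_eqE !val_eqE.
Qed.

Lemma badn_iso (H : seq ('I_8 * 'I_8)) : mg_iso H Q3' -> badn H -> badn Q3'.
Proof.
move=> [f [bij Hm]]; have inj := bij_inj bij.
rewrite /badn /badn' => /orP [/orP [B|B] | B].
- move/hasI8: B => [a]; rewrite multnE Hm => Pa.
  apply/orP; left; apply/orP; left; apply/hasP; exists (val (f a)); first exact: memI8.
  by rewrite multnE.
- move/hasI8: B => [a /hasI8 [b]]; rewrite multnE Hm val_eqE => /andP [nab Pab].
  apply/orP; left; apply/orP; right; apply/hasP; exists (val (f a)); first exact: memI8.
  apply/hasP; exists (val (f b)); first exact: memI8.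
  by rewrite multnE val_eqE (inj_eq inj) nab.
- move/hasI8: B => [a /hasI8 [b]] /andP [/andP [nab Pab] /hasI8 [c]].
  rewrite !multnE !Hm !val_eqE in nab Pab * => /and4P [nbc nac Pbc Pac].
  apply/orP; right; apply/hasP; exists (val (f a)); first exact: memI8.
  apply/hasP; exists (val (f b)); first exact: memI8.
  rewrite multnE val_eqE (inj_eq inj) nab Pab.
  apply/hasP; exists (val (f c)); first exact: memI8.
  by rewrite !multnE !val_eqE !(inj_eq inj) nbc nac Pbc Pac.
Qed.

Lemma badnQ3 : badn Q3' = false.
Proof. by vm_compute. Qed.

Lemma Q3E : Q3 = Q3'.
Proof.
have -> : Q3 = [seq (inord p.1, inord p.2) | p <- Q3l] :> seq ('I_8 * 'I_8) by [].
rewrite /Q3'; apply/eq_in_map => p Hp.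
have /andP [h1 h2] : (p.1 < 8) && (p.2 < 8).
  by move: p Hp; apply/allP.
case: p Hp h1 h2 => x y /= _ h1 h2.
have E1 : inord x = o8 x.
  apply/val_inj; change (nat_of_ord (@inord 7 x) = x %% 8); rewrite inordK // modn_small //.
have E2 : inord y = o8 y.
  apply/val_inj; change (nat_of_ord (@inord 7 y) = y %% 8); rewrite inordK // modn_small //.
by rewrite E1 E2.
Qed.
Lemma memV8 (v : 'I_8) : v \in V8.
Proof.
apply/mapP; exists (val v); first exact: memI8.
by apply: val_inj; change (nat_of_ord v = v %% 8); rewrite modn_small.
Qed.

Lemma hv_size : all (fun v => size (hvQ v) == 3) V8.
Proof. by vm_compute. Qed.

Lemma refute_sound P lab C : scenario3 P Q3 -> design_in Q3 lab P ->
  holds lab C -> refute badlist C -> False.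
Proof.
move=> [_ [_ Hiso]] Hd HC; have [sz I] := closure_inv HC.
have vHE : all valid HE by [].
rewrite /refute /refute' => /orP [] /hasP [x Hx Ex].
- have vx := allP vHE x Hx.
  have vox : valid (oppe x) by [].
  have := I _ _ vx vox (eqP Ex); rewrite Lbl_opp => /esym/eqP.
  by rewrite (negbTE (hat_neq _)).
- case: x Hx Ex => y z; rewrite mem_filter => /andP [/andP [nx Bx] /allpairsP [[y' z'] [Hy Hz Eyz]]] Ex.
  case: Eyz => ? ?; subst y' z'.
  move: nx Bx; rewrite [(y, z).1]/= [(y, z).2]/= => nx Bx.
  have vy := allP vHE y Hy; have vz := allP vHE z Hz.
  have L := I _ _ vy vz (eqP Ex).
  have Hd' : design_in (swapE Q3' y z) lab P.
    move=> v; have := Hd v; rewrite /tile_in Q3E.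
    by rewrite (eq_has (permPl (swap_perm v _ _ nx L))).
  have := Hiso _ (ex_intro _ lab Hd'); rewrite Q3E => /badn_iso/(_ Bx).
  by rewrite badnQ3.
Qed.
End L.


Lemma check_ok : check = true.
Proof. by vm_compute. Qed.

Theorem lemma6 (S : eqType) (P : seq (tile S)) (lab : nat -> cend S) :
  is_pot P -> scenario3 P Q3 -> design_in Q3 lab P ->
  ~ exists a1 b1 a2 b2 a3 b3 : 'I_8,
      [/\ uniq [:: a1; b1; a2; b2; a3; b3],
          perm_eq (tile_at Q3 lab a1) (tile_at Q3 lab b1),
          perm_eq (tile_at Q3 lab a2) (tile_at Q3 lab b2) &
          perm_eq (tile_at Q3 lab a3) (tile_at Q3 lab b3)].
Proof.
move=> _ Hs Hd [a1 [b1 [a2 [b2 [a3 [b3 [Hu H1 H2 H3]]]]]]].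
have F : forall c, holds lab c -> refute badlist c -> False.
  by move=> c h r; apply: (refute_sound Hs Hd h r).
have Hc : forall a b : 'I_8, perm_eq (tile_at Q3 lab a) (tile_at Q3 lab b) ->
    exists2 c, c \in cases3 (hvQ a) (hvQ b) & holds lab c.
  move=> a b; rewrite Q3E !tile_hv => Hp; apply: cases3_sound Hp; apply/eqP.
  - exact: (allP hv_size a (memV8 a)).
  - exact: (allP hv_size b (memV8 b)).
have Hsurv : forall (a b : 'I_8) c, a != b -> c \in cases3 (hvQ a) (hvQ b) ->
    holds lab c -> ((a, b), c) \in surv badlist.
  move=> a b c nab Hc' Hh.
  case: (boolP (refute badlist c)) => [r|r]; first by case: (F _ Hh r).
  rewrite /surv mem_filter; apply/andP; split; first by apply/andP; split.
  rewrite /L3; apply/allpairsPdep; exists (a, b), c; split => //.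
  by rewrite /pairsL; apply: allpairs_f; apply: memV8.
have [c1 Hc1 Hh1] := Hc _ _ H1.
have [c2 Hc2 Hh2] := Hc _ _ H2.
have [c3 Hc3 Hh3] := Hc _ _ H3.
have Hu' := Hu.
move: Hu' => /= /andP [U1 /andP [U2 /andP [U3 /andP [U4 /andP [U5 _]]]]].
have n1 : a1 != b1 by apply: contra U1 => /eqP ->; rewrite mem_head.
have n2 : a2 != b2 by apply: contra U3 => /eqP ->; rewrite mem_head.
have n3 : a3 != b3 by apply: contra U5 => /eqP ->; rewrite mem_head.
have S1 := Hsurv _ _ _ n1 Hc1 Hh1.
have S2 := Hsurv _ _ _ n2 Hc2 Hh2.
have S3 := Hsurv _ _ _ n3 Hc3 Hh3.
have Hh : holds lab (c1 ++ c2 ++ c3).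
  by move=> p; rewrite !mem_cat => /orP [ /Hh1 | /orP [ /Hh2 | /Hh3 ] ].
have := check_ok; rewrite /check /checkB => /allP/(_ _ S1)/allP/(_ _ S2)/allP/(_ _ S3).
case/orP => [/negP [] | R]; first exact: Hu.
exact: (F _ Hh R).
Qed.
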